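(* Let $\sigma=(a_1,\ldots,a_s)$ be an $r$-good partition of $r$ and let $H=H(n,r,q\mid\sigma)$. Let $A,B$ be disjoint sets with $A\cup B=\{1,\ldots,s\}$ such that, with $a=\sum_{j\in A}a_j$ and $b=\sum_{j\in B}a_j$, one has $\gcd(a,b)=\gcd(a,r)=\gcd(b,r)=1$, and let $L=\mathrm{lcm}(a,b)$. Then: (1) If either ($r\mid q$ and $n\ge s$) or ($r\mid n$ and $q\ge (L-1)(r-1)$), then $H$ has a perfect matching, i.e. $\nu(H)=\frac{qn}{r}$. (2) If $q\ge L(r-1)$ and $n\ge s$, then $H$ has a matching leaving at most $L(r-1)^2$ vertices unmatched; that is, $\nu(H)\ge \frac{qn-L(r-1)^2}{r}$. (3) If $q\ge L(r^2-1)$, $s\ge 3$ and $n\ge s+r$, then $H$ has a matching leaving at most $(r-1)^2$ vertices unmatched; that is, $\nu(H)\ge\frac{qn-(r-1)^2}{r}$.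
   Context: A $\sigma$-hypergraph $H=H(n,r,q\mid\sigma)$, for a partition $\sigma=(a_1,\ldots,a_s)$ of $r$ with $s=s(\sigma)$ parts, is the $r$-uniform hypergraph whose vertex set is the disjoint union of $n$ classes $V_1,\ldots,V_n$, each of size $q$; an $r$-subset $K$ of vertices is an edge iff the multiset of non-zero values $|K\cap V_i|$ ($1\le i\le n$) equals $\sigma$. The partition $\sigma$ is $r$-good if there is a subsequence $\pi$ of $(a_1,\ldots,a_s)$ (a selection of some of the parts, by index) such that $\sum_{a_j\in\pi}a_j$ is coprime to $r$. A matching is a set of pairwise vertex-disjoint edges; it is perfect if it covers every vertex; $\nu(H)$ is the maximum size of a matching. *)

(* Defs.v *)
From mathcomp Require Import all_boot.
Set Implicit Arguments. Unset Strict Implicit. Unset Printing Implicit Defensive.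

(* Vertices of H(n,r,q|sigma): pairs (i, k) with i : 'I_n the class index and
   k : 'I_q the position inside class V_i. *)

Definition class_meet n q (K : {set 'I_n * 'I_q}) (i : 'I_n) : nat :=
  #|[set v in K | v.1 == i]|.

Definition is_edge n q (r : nat) (sigma : seq nat) (K : {set 'I_n * 'I_q}) : bool :=
  (#|K| == r) &&
  perm_eq [seq c <- [seq class_meet K i | i <- enum 'I_n] | c != 0] sigma.

Definition part_sum (sigma : seq nat) (S : {set 'I_(size sigma)}) : nat :=
  \sum_(j in S) nth 0 sigma j.

Definition r_good (r : nat) (sigma : seq nat) : bool :=
  [exists S : {set 'I_(size sigma)}, coprime (part_sum S) r].

Definition is_matching n q r sigma (M : {set {set 'I_n * 'I_q}}) : bool :=
  [forall K in M, is_edge r sigma K] &&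
  [forall K in M, forall K' in M, (K != K') ==> [disjoint K & K']].

Definition covered n q (M : {set {set 'I_n * 'I_q}}) : {set 'I_n * 'I_q} :=
  \bigcup_(K in M) K.

(* Main.v *)
Require Import Defs.
From mathcomp Require Import all_boot zify.
Set Implicit Arguments. Unset Strict Implicit. Unset Printing Implicit Defensive.


Lemma card_pairP n q (P : 'I_n -> 'I_q -> bool) :
  #|[set v : 'I_n * 'I_q | P v.1 v.2]| = \sum_i \sum_(k < q) P i k.
Proof.
rewrite -sum1_card pair_big /= big_mkcond /=.
by apply: eq_bigr => [[i k]] _; rewrite inE /=; case: (P i k).
Qed.

Lemma sum_int q l h : \sum_(k < q) (l <= k < h) = minn h q - minn l q.
Proof.
elim: q => [|q IH]; first by rewrite big_ord0; lia.
rewrite big_ord_recr /= IH; case: (leqP l q) => Hl; case: (ltnP q h) => Hh /=; lia.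
Qed.

Lemma sum_ge q l : \sum_(k < q) (l <= k) = q - l.
Proof.
elim: q => [|q IH]; first by rewrite big_ord0.
rewrite big_ord_recr /= IH; case: (leqP l q) => Hl /=; lia.
Qed.


Lemma count_enumP (T : finType) (P : pred T) : count P (enum T) = #|P|.
Proof. by rewrite -sum1_count -sum1_card big_enum_cond /=. Qed.

Section Real.
Variables (sigma : seq nat) (n q : nat).
Local Notation s := (size sigma).
Local Notation r := (sumn sigma).
Hypothesis Hpos : all (fun x => 0 < x) sigma.

Definition wl (f : {ffun 'I_s -> 'I_n}) (i : 'I_n) : nat :=
  \sum_(j | f j == i) nth 0 sigma j.
Definition load (T : seq {ffun 'I_s -> 'I_n}) (i : 'I_n) : nat :=
  \sum_(f <- T) wl f i.

Definition blk (l w : 'I_n -> nat) : {set 'I_n * 'I_q} :=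
  [set v : 'I_n * 'I_q | (l v.1 <= v.2) && (v.2 < l v.1 + w v.1)].
Definition pref (l : 'I_n -> nat) : {set 'I_n * 'I_q} := [set v : 'I_n * 'I_q | v.2 < l v.1].

Lemma sum_sigma : \sum_(j < s) nth 0 sigma j = r.
Proof. by rewrite sumnE (big_nth 0) big_mkord. Qed.

Lemma wl_inj (f : {ffun 'I_s -> 'I_n}) j : injective f -> wl f (f j) = nth 0 sigma j.
Proof.
move=> fi; rewrite /wl (big_pred1 j) // => j'; apply/eqP/eqP => [/fi|->] //.
Qed.

Lemma wl_out (f : {ffun 'I_s -> 'I_n}) i : (forall j, f j != i) -> wl f i = 0.
Proof. by move=> H; rewrite /wl big_pred0 // => j; rewrite (negbTE (H j)). Qed.

Lemma sum_wl (f : {ffun 'I_s -> 'I_n}) : \sum_i wl f i = r.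
Proof.
rewrite -sum_sigma /wl (partition_big f predT) //.
Qed.

Lemma class_meet_blk l w i : l i + w i <= q -> class_meet (blk l w) i = w i.
Proof.
move=> H; rewrite /class_meet.
have -> : [set v in blk l w | v.1 == i] =
  [set v : 'I_n * 'I_q | (v.1 == i) && (l v.1 <= v.2 < l v.1 + w v.1)].
  by apply/setP => v; rewrite !inE andbC.
rewrite (card_pairP (fun i' (k : 'I_q) => (i' == i) && (l i' <= k < l i' + w i'))) (bigD1 i) //= [X in _ + X]big1; last first.
  move=> i' Hi; apply: big1 => k _; by rewrite (negbTE Hi).
rewrite addn0 eqxx /= sum_int; lia.
Qed.

Lemma card_blk l w : (forall i, l i + w i <= q) -> #|blk l w| = \sum_i w i.
Proof.
move=> H; rewrite /blk (card_pairP (fun i' (k : 'I_q) => (l i' <= k) && (k < l i' + w i'))); apply: eq_bigr => i _.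
by rewrite sum_int; have := H i; lia.
Qed.

Lemma is_edge_blk l (f : {ffun 'I_s -> 'I_n}) : injective f -> (forall i, l i + wl f i <= q) ->
  is_edge r sigma (blk l (wl f)).
Proof.
move=> fi H; apply/andP; split.
  by rewrite card_blk // sum_wl.
have Ecm : forall i, class_meet (blk l (wl f)) i = wl f i.
  by move=> i; rewrite class_meet_blk.
rewrite (eq_map Ecm).
apply/permP => p; rewrite count_filter count_map.
have -> : count p sigma = #|[pred j : 'I_s | p (nth 0 sigma j)]|.
  have E : sigma = map (nth 0 sigma) (iota 0 s) by rewrite map_nth_iota0 // take_size.
  rewrite -count_enumP {1}E -val_enum_ord -map_comp count_map.
  by apply: eq_count.
rewrite count_enumP -(card_imset _ fi); apply: eq_card => i.
  rewrite !inE /=; apply/idP/imsetP.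
    case/andP=> Hp Hnz.
    have [j Hj] : exists j, f j == i.
      apply/existsP; apply: contraR Hnz => /existsPn Hn.
      by rewrite wl_out.
    move/eqP: Hj => Hj; subst i; exists j => //.
    by rewrite inE /= -(wl_inj j fi).
  case=> j; rewrite inE /= => Hp ->; rewrite wl_inj // Hp /=.
  have : nth 0 sigma j \in sigma by apply: mem_nth.
  by move/(allP Hpos); rewrite lt0n.

Qed.

Lemma sub_covered (M : {set {set 'I_n * 'I_q}}) K : K \in M -> K \subset covered M.
Proof. by move=> KM; rewrite /covered (bigcup_max K). Qed.

Lemma realize (T : seq {ffun 'I_s -> 'I_n}) : 0 < r -> all (fun f : {ffun 'I_s -> 'I_n} => injectiveb f) T ->
  (forall i, load T i <= q) ->
  exists M : {set {set 'I_n * 'I_q}}, is_matching r sigma M /\ covered M = pref (load T).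
Proof.
move=> r0; elim: T => [|f T IH] /=.
  move=> _ _; exists set0; split.
    by apply/andP; split; apply/forall_inP => K; rewrite inE.
  rewrite /covered big_set0; apply/setP => v; rewrite !inE /load big_nil.
  by [].
case/andP=> /injectiveP fi HT Hq.
have Hl : forall i, load (f :: T) i = wl f i + load T i by move=> i; rewrite /load big_cons.
have [M' [HM' HC']] : exists M' : {set {set 'I_n * 'I_q}}, is_matching r sigma M' /\ covered M' = pref (load T).
  apply: IH => // i; have := Hq i; rewrite Hl; lia.
set K := blk (load T) (wl f).
have HK : is_edge r sigma K.
  apply: is_edge_blk => // i; have := Hq i; rewrite Hl; lia.
have Kdis : [disjoint K & covered M'].
  rewrite HC' -setI_eq0; apply/eqP/setP => v; rewrite !inE.
  apply/negP => /andP [/andP [H1 _] H2]; lia.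
have KnM : K \notin M'.
  apply/negP => KM.
  have : K \subset covered M' by apply: sub_covered.
  move=> Ksub.
  have : #|K| == 0.
    rewrite cards_eq0; move: Kdis; rewrite -setI_eq0.
    by move/setIidPl: Ksub => ->.
  by case/andP: HK => /eqP -> _; rewrite eqn0Ngt r0.
case/andP: HM' => /forall_inP HE /forall_inP HD.
exists (K |: M'); split.
  apply/andP; split.
    apply/forall_inP => K1; rewrite in_setU1 => /orP [/eqP -> // | ]; exact: HE.
  apply/forall_inP => K1 H1; apply/forall_inP => K2 H2; apply/implyP => Hne.
  move: H1 H2; rewrite !in_setU1 => /orP [/eqP E1 | H1] /orP [/eqP E2 | H2].
  - by rewrite E1 E2 eqxx in Hne.
  - by subst K1; apply: disjointWr Kdis; apply: sub_covered.
  - subst K2; rewrite disjoint_sym; apply: disjointWr Kdis; exact: sub_covered.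
  - by have := HD K1 H1; move/forall_inP/(_ K2 H2)/implyP; apply.
rewrite /covered big_setU1 //= -/(covered M') HC'.
apply/setP => v; rewrite !inE Hl; lia.
Qed.

Lemma uncovered_card (l : 'I_n -> nat) : #|~: pref l| = \sum_i (q - l i).
Proof.
rewrite /pref.
have -> : ~: [set v : 'I_n * 'I_q | v.2 < l v.1] = [set v : 'I_n * 'I_q | l v.1 <= v.2].
  by apply/setP => v; rewrite !inE -leqNgt.
rewrite (card_pairP (fun i (k : 'I_q) => l i <= k)); apply: eq_bigr => i _.
by rewrite sum_ge.
Qed.
End Real.


Lemma sum_eqk m k : \sum_(u < m) (u == k :> nat) = (k < m).
Proof.
elim: m => [|m IH]; first by rewrite big_ord0.
rewrite big_ord_recr /= IH; case: (ltngtP k m) => H /=; lia.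
Qed.

Lemma window1 m x k : k < m -> \sum_(u < m) ((x + u) %% m == k) = 1.
Proof.
case: m => [//|m] Hk.
elim: x => [|x IH].
  transitivity (\sum_(u < m.+1) (u == k :> nat)); last by rewrite sum_eqk Hk.
  by apply: eq_bigr => u _; rewrite add0n modn_small.
rewrite -IH big_ord_recr [RHS]big_ord_recl /=.
have -> : (x.+1 + m) %% m.+1 = x %% m.+1.
  by rewrite addSnnS modnDr.
rewrite addn0 addnC; congr (_ + _); apply: eq_bigr => u _.
by rewrite addSnnS.
Qed.

Lemma countmod m t c k : k < m -> \sum_(0 <= e < m * t) ((e + c) %% m == k) = t.
Proof.
move=> Hk; elim: t => [|t IH]; first by rewrite muln0 big_geq.
rewrite mulnS addnC (@big_cat_nat _ _ _ (m * t)) ?leq_addr // IH /=.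
rewrite -{1}[m * t]add0n big_addn addKn big_mkord.
rewrite -[t.+1]addn1; congr (_ + _).
rewrite -(window1 (m * t + c) Hk); apply: eq_bigr => u _.
by congr (nat_of_bool (_ %% _ == _)); lia.
Qed.

Section Tool.
Variables (sigma : seq nat) (n : nat) (i0 : 'I_n).
Local Notation s := (size sigma).

Definition place (J : {set 'I_s}) (X Y : seq 'I_n) (e : nat) : {ffun 'I_s -> 'I_n} :=
  [ffun j => if j \in J then nth i0 X ((e + index j (enum J)) %% size X)
             else nth i0 Y ((e + index j (enum (~: J))) %% size Y)].
Definition tool J X Y E := [seq place J X Y e | e <- iota 0 E].

Lemma idx_lt (J : {set 'I_s}) j : j \in J -> index j (enum J) < #|J|.
Proof. by move=> jJ; rewrite cardE index_mem mem_enum. Qed.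

Lemma idx_inj (J : {set 'I_s}) (X : seq 'I_n) e j j' : uniq X -> j \in J -> j' \in J ->
  #|J| <= size X ->
  nth i0 X ((e + index j (enum J)) %% size X) = nth i0 X ((e + index j' (enum J)) %% size X) ->
  j = j'.
Proof.
move=> uX jJ j'J HJ.
have m0 : 0 < size X.
  apply: leq_trans HJ; rewrite card_gt0; apply/set0Pn; exists j; exact jJ.
have Hj := idx_lt jJ; have Hj' := idx_lt j'J.
move/eqP; rewrite nth_uniq ?ltn_pmod // => /eqP.
rewrite !(addnC e) => /eqP; rewrite eqn_modDr !modn_small; try lia.
move/eqP => E.
have jE : j \in enum J by rewrite mem_enum.
have j'E : j' \in enum J by rewrite mem_enum.
by rewrite -(nth_index j jE) E nth_index.
Qed.

Lemma tool_inj (J : {set 'I_s}) (X Y : seq 'I_n) E : uniq X -> uniq Y -> #|J| <= size X -> #|~: J| <= size Y ->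
  (J = setT \/ forall x, x \in X -> x \notin Y) ->
  all (fun f : {ffun 'I_s -> 'I_n} => injectiveb f) (tool J X Y E).
Proof.
move=> uX uY HX HY HD; apply/allP => f /mapP [e _ ->]; apply/injectiveP => j j'.
rewrite !ffunE.
have memX : forall j, j \in J -> nth i0 X ((e + index j (enum J)) %% size X) \in X.
  move=> j1 j1J; apply: mem_nth; rewrite ltn_pmod //.
  apply: leq_trans HX; rewrite card_gt0; apply/set0Pn; exists j1; exact j1J.
have memY : forall j, j \notin J -> nth i0 Y ((e + index j (enum (~: J))) %% size Y) \in Y.
  move=> j1 j1J; apply: mem_nth; rewrite ltn_pmod //.
  apply: leq_trans HY; rewrite card_gt0; apply/set0Pn; exists j1; rewrite inE; exact j1J.
case: ifP => jJ; case: ifP => j'J.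
- exact: idx_inj.
- move=> Ex; case: HD => [HJ | HD]; first by rewrite HJ inE in j'J.
  by have := HD _ (memX _ jJ); rewrite Ex memY ?j'J.
- move=> Ex; case: HD => [HJ | HD]; first by rewrite HJ inE in jJ.
  by have := HD _ (memX _ j'J); rewrite -Ex memY ?jJ.
- apply: idx_inj => //; by rewrite inE ?jJ ?j'J.
Qed.

Lemma count_in (X : seq 'I_n) E c i : uniq X -> 0 < size X -> size X %| E ->
  \sum_(e <- iota 0 E) (nth i0 X ((e + c) %% size X) == i) = (i \in X) * (E %/ size X).
Proof.
move=> uX m0 dE.
case iX: (i \in X); last first.
  rewrite mul0n big1 // => e _.
  have : nth i0 X ((e + c) %% size X) \in X by apply: mem_nth; rewrite ltn_pmod.
  by case: eqP => // ->; rewrite iX.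
rewrite mul1n.
have -> : iota 0 E = index_iota 0 (size X * (E %/ size X)) by rewrite /index_iota subn0 mulnC divnK.
have Hk : index i X < size X by rewrite index_mem.
rewrite -[in RHS](countmod (E %/ size X) c Hk).
apply: eq_bigr => e _; rewrite -{1}(nth_index i0 iX) nth_uniq ?index_mem ?ltn_pmod //.
Qed.

Lemma loadJ (J : {set 'I_s}) (X : seq 'I_n) E i : uniq X -> #|J| <= size X -> size X %| E ->
  \sum_(e <- iota 0 E) \sum_(j in J) (nth i0 X ((e + index j (enum J)) %% size X) == i) * nth 0 sigma j
   = (i \in X) * (E %/ size X * part_sum J).
Proof.
move=> uX HJ dE.
case: (posnP #|J|) => J0.
  have J0' : J = set0 by apply/eqP; rewrite -cards_eq0 J0.
  rewrite J0' /part_sum !big_set0 muln0 muln0 big1 // => e _; by rewrite big_set0.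
have m0 : 0 < size X by apply: leq_trans HJ.
rewrite exchange_big /part_sum big_distrr big_distrr /=; apply: eq_bigr => j jJ.
by rewrite -big_distrl /= count_in // mulnA.
Qed.

Lemma tool_load (J : {set 'I_s}) (X Y : seq 'I_n) E i : uniq X -> uniq Y ->
  #|J| <= size X -> #|~: J| <= size Y -> size X %| E -> size Y %| E ->
  @load sigma n (tool J X Y E) i =
  (i \in X) * (E %/ size X * part_sum J) + (i \in Y) * (E %/ size Y * part_sum (~: J)).
Proof.
move=> uX uY HX HY dX dY.
rewrite -loadJ // -loadJ // -big_split /load big_map /=; apply: eq_bigr => e _.
rewrite /wl big_mkcond (bigID (mem J)) /=; congr (_ + _).
  apply: eq_bigr => j jJ; rewrite ffunE jJ; by case: (_ == i); rewrite ?mul1n ?mul0n.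
apply: eq_big => [j|j]; first by rewrite inE.
move=> jJ; rewrite ffunE (negbTE jJ); by case: (_ == i); rewrite ?mul1n ?mul0n.
Qed.
End Tool.


Lemma sum_blocks (f : nat -> nat) r G :
  \sum_(g < G) \sum_(u < r) f (g * r + u) = \sum_(0 <= k < r * G) f k.
Proof.
elim: G => [|G IH]; first by rewrite big_ord0 muln0 big_geq.
rewrite big_ord_recr /= IH mulnS [r + _]addnC (@big_cat_nat _ _ _ (r * G) 0 (r * G + r)) ?leq_addr //=.
congr (_ + _); rewrite -{1}[r * G]add0n big_addn addKn big_mkord.
by apply: eq_bigr => u _; congr f; lia.
Qed.

Lemma count_res N t e i : i < N -> e <= N ->
  \sum_(0 <= k < N * t + e) (k %% N == i) = t + (i < e).
Proof.
move=> iN eN.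
rewrite (@big_cat_nat _ _ _ (N * t)) ?leq_addr //=.
have E : \sum_(0 <= k < N * t) (k %% N == i) = t.
  by rewrite -[RHS](countmod t 0 iN); apply: eq_bigr => k _; rewrite addn0.
rewrite E; congr (_ + _).
rewrite -{1}[N * t]add0n big_addn addKn big_mkord -sum_eqk.
apply: eq_bigr => u _; rewrite addnC [N * t]mulnC modnMDl modn_small //.
by apply: leq_trans (ltn_ord u) eN.
Qed.

Section Cons.
Variables (sigma : seq nat) (n : nat) (i0 : 'I_n).
Local Notation s := (size sigma).
Local Notation r := (sumn sigma).
Hypothesis Hpos : all (fun x => 0 < x) sigma.

Local Notation load := (@load sigma n).
Local Notation ffT := {ffun 'I_s -> 'I_n}.

Lemma load_cat (T1 T2 : seq ffT) i : load (T1 ++ T2) i = load T1 i + load T2 i.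
Proof. by rewrite /load big_cat. Qed.

Definition rep k (T : seq ffT) := flatten (nseq k T).

Lemma load_rep k T i : load (rep k T) i = k * load T i.
Proof.
elim: k => [|k IH]; first by rewrite /load /rep /= big_nil.
by rewrite /rep /= load_cat -/(rep k T) IH mulSn.
Qed.

Lemma inj_cat (T1 T2 : seq ffT) : all (fun f : ffT => injectiveb f) T1 ->
  all (fun f : ffT => injectiveb f) T2 -> all (fun f : ffT => injectiveb f) (T1 ++ T2).
Proof. by rewrite all_cat => -> ->. Qed.

Lemma inj_rep k (T : seq ffT) : all (fun f : ffT => injectiveb f) T ->
  all (fun f : ffT => injectiveb f) (rep k T).
Proof.
move=> H; elim: k => [|k IH] //=; exact: inj_cat.
Qed.

Lemma s_le_r : s <= r.
Proof.
rewrite -(sum_sigma sigma) -[X in X <= _]card_ord -sum1_card.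
apply: leq_sum => j _; have : nth 0 sigma j \in sigma by apply: mem_nth.
by move/(allP Hpos).
Qed.

Lemma part_sumT : part_sum [set: 'I_s] = r.
Proof. by rewrite /part_sum -(sum_sigma sigma); apply: eq_bigl => j; rewrite inE. Qed.

Lemma part_sum0 : part_sum (~: [set: 'I_s]) = 0.
Proof. by rewrite /part_sum big1 // => j; rewrite !inE. Qed.

Lemma part_sumC (A : {set 'I_s}) : part_sum A + part_sum (~: A) = r.
Proof.
rewrite -(sum_sigma sigma) (bigID (mem A)) /=; congr (_ + _).
by apply: eq_bigl => j; rewrite inE.
Qed.

Lemma card_le_ps (A : {set 'I_s}) : #|A| <= part_sum A.
Proof.
rewrite -sum1_card; apply: leq_sum => j _; have : nth 0 sigma j \in sigma by apply: mem_nth.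
by move/(allP Hpos).
Qed.

Definition T1 (X : seq 'I_n) := tool i0 [set: 'I_s] X X (size X).

Lemma T1_inj X : uniq X -> s <= size X -> all (fun f : ffT => injectiveb f) (T1 X).
Proof.
move=> uX sX; apply: tool_inj => //; first by rewrite cardsT card_ord.
  by apply: leq_trans sX; rewrite setCT cards0 leq0n.
by left.
Qed.

Lemma T1_load X i : uniq X -> s <= size X -> load (T1 X) i = (i \in X) * r.
Proof.
move=> uX sX; rewrite tool_load //; first last.
- by rewrite setCT cards0.
- by rewrite cardsT card_ord.
rewrite part_sum0 !muln0 addn0 part_sumT.
case iX: (i \in X) => //; rewrite divnn.
case: X iX {uX sX} => [|x X'] iX; first by rewrite in_nil in iX.
by rewrite /= !mul1n.

Qed.

Definition om N k : 'I_n := insubd i0 (k %% N).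
Definition W N g := [seq om N (g * r + u) | u <- iota 0 r].
Definition grp (A : {set 'I_s}) N g :=
  tool i0 A (take (part_sum A) (W N g)) (drop (part_sum A) (W N g)) (part_sum A * part_sum (~: A)).
Definition grps A N G := flatten [seq grp A N g | g <- iota 0 G].

Lemma om_eq N k i : 0 < N -> N <= n -> (om N k == i) = (k %% N == i).
Proof.
move=> N0 Nn; rewrite -val_eqE /om val_insubd.
by have -> : k %% N < n by apply: leq_trans (ltn_pmod k N0) Nn.
Qed.

Lemma W_uniq N g : 0 < N -> N <= n -> r <= N -> uniq (W N g).
Proof.
move=> N0 Nn rN; rewrite map_inj_in_uniq ?iota_uniq // => u u'.
rewrite !mem_iota !add0n => ur u'r /eqP.
rewrite om_eq // /om val_insubd.
have -> : (g * r + u') %% N < n by apply: leq_trans (ltn_pmod _ N0) Nn.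
rewrite eqn_modDl !modn_small => [/eqP//||]; lia.
Qed.

Lemma W_mem N g i : 0 < N -> N <= n -> r <= N ->
  (i \in W N g) = \sum_(u < r) ((g * r + u) %% N == i) :> nat.
Proof.
move=> N0 Nn rN; rewrite -count_uniq_mem ?W_uniq // /W count_map -sumn_count sumnE big_map.
have -> : iota 0 r = index_iota 0 r by rewrite /index_iota subn0.
rewrite big_mkord.
by apply: eq_bigr => u _ /=; rewrite om_eq.
Qed.

Lemma grp_inj A N g : 0 < N -> N <= n -> r <= N ->
  all (fun f : ffT => injectiveb f) (grp A N g).
Proof.
move=> N0 Nn rN; have uW := W_uniq g N0 Nn rN.
have sW : size (W N g) = r by rewrite size_map size_iota.
have Ha : part_sum A <= r by rewrite -(part_sumC A) leq_addr.
move: (uW); rewrite -(cat_take_drop (part_sum A) (W N g)) cat_uniq => /and3P [u1 hd u2].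
apply: tool_inj => //.
- by rewrite size_takel ?sW // card_le_ps.
- by rewrite size_drop sW -(part_sumC A) addKn card_le_ps.
- right => x x1; apply/negP => x2; move/hasP: hd; apply; by exists x.
Qed.

Lemma grp_load A N g i : 0 < N -> N <= n -> r <= N -> 0 < part_sum A -> 0 < part_sum (~: A) ->
  load (grp A N g) i = part_sum A * part_sum (~: A) * (i \in W N g).
Proof.
move=> N0 Nn rN a0 b0; have uW := W_uniq g N0 Nn rN.
have sW : size (W N g) = r by rewrite size_map size_iota.
have Ha : part_sum A <= r by rewrite -(part_sumC A) leq_addr.
have sT : size (take (part_sum A) (W N g)) = part_sum A by rewrite size_takel ?sW.
have sD : size (drop (part_sum A) (W N g)) = part_sum (~: A)
  by rewrite size_drop sW -(part_sumC A) addKn.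
have uW' := uW; rewrite -(cat_take_drop (part_sum A) (W N g)) in uW'.
move: (uW'); rewrite cat_uniq => /and3P [u1 hd u2].
rewrite /grp tool_load // ?sT ?sD ?card_le_ps ?(dvdn_mulr _ (dvdnn _)) ?(dvdn_mull _ (dvdnn _)) //.
rewrite mulKn // mulnK //.
rewrite -(count_uniq_mem i uW).
have -> : count_mem i (W N g) = count_mem i (take (part_sum A) (W N g)) + count_mem i (drop (part_sum A) (W N g))
  by rewrite -count_cat cat_take_drop.
rewrite !count_uniq_mem // [part_sum (~: A) * _]mulnC.
case: (i \in take _ _); case: (i \in drop _ _); rewrite /= ?mul1n ?mul0n ?addn0 ?add0n ?muln1 ?muln0 //. by rewrite mulnDr muln1.
Qed.

Lemma grps_load A N G i : 0 < N -> N <= n -> r <= N -> 0 < part_sum A -> 0 < part_sum (~: A) ->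
  load (grps A N G) i = part_sum A * part_sum (~: A) * \sum_(0 <= k < r * G) (k %% N == i).
Proof.
move=> N0 Nn rN a0 b0.
rewrite /load /grps big_flatten big_map /= -sum_blocks big_distrr /=.
have -> : iota 0 G = index_iota 0 G by rewrite /index_iota subn0.
rewrite big_mkord.
apply: eq_bigr => g _; rewrite -/(load (grp A N g) i) grp_load // W_mem //.
Qed.

Lemma grps_inj A N G : 0 < N -> N <= n -> r <= N ->
  all (fun f : ffT => injectiveb f) (grps A N G).
Proof.
move=> N0 Nn rN; rewrite /grps; elim: (iota 0 G) => [|g l IH] //=.
by apply: inj_cat => //; apply: grp_inj.
Qed.
End Cons.


Lemma decomp L r q : 0 < r -> coprime L r -> (L - 1) * (r - 1) <= q ->
  exists al be, al < r /\ q = al * L + be * r.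
Proof.
move=> r0 cLr Hq.
case: (posnP L) => L0.
  move: cLr; rewrite L0 /coprime gcd0n => /eqP r1.
  by exists 0, q; rewrite r1 muln1.
case: (egcdnP r L0) => km kn Hk _.
move: cLr; rewrite /coprime => /eqP g1; rewrite g1 in Hk.
set al := (km * q) %% r.
have Hal : al < r by rewrite ltn_pmod.
have Hm : (al * L) %% r = q %% r.
  rewrite /al modnMml -mulnA (mulnC q) mulnA Hk mulnDl mul1n.
  by rewrite -mulnA (mulnC r) mulnA modnMDl.
have E1 := divn_eq (al * L) r; have E2 := divn_eq q r.
rewrite Hm in E1.
set x := al * L %/ r in E1; set y := q %/ r in E2.
have Hm2 := ltn_pmod q r0.
have I1 : al * L <= (r - 1) * L by apply: leq_mul => //; lia.
have I2 : (r - 1) * L = (L - 1) * (r - 1) + (r - 1).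
  by rewrite mulnC -{1}(subnK L0) mulnDl mul1n.
have Hxy : x <= y.
  rewrite leqNgt; apply/negP => Hlt.
  have : (y + 1) * r <= x * r by apply: leq_mul => //; lia.
  rewrite mulnDl mul1n; lia.
have I3 : x * r <= y * r by apply: leq_mul.
exists al, (y - x); split => //.
rewrite mulnBl; lia.
Qed.


Lemma sum_lt q h : \sum_(k < q) (k < h) = minn h q.
Proof.
elim: q => [|q IH]; first by rewrite big_ord0; lia.
rewrite big_ord_recr /= IH; case: (ltnP q h) => Hh /=; lia.
Qed.

Lemma count_res' N t e i : 0 < N -> e <= N ->
  \sum_(0 <= k < N * t + e) (k %% N == i) = if i < N then t + (i < e) else 0.
Proof.
move=> N0 eN; case: ifP => iN; first exact: count_res.
rewrite big1 // => k _; have := ltn_pmod k N0; case: eqP => // ->; by rewrite iN.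
Qed.

Section Main.
Variables (sigma : seq nat) (n q : nat).
Local Notation s := (size sigma).
Local Notation r := (sumn sigma).
Hypothesis Hpos : all (fun x => 0 < x) sigma.
Local Notation load := (@load sigma n).
Local Notation ffT := {ffun 'I_s -> 'I_n}.
Local Notation injT T := (all (fun f : ffT => injectiveb f) T).

Lemma finish (T : seq ffT) bound : 0 < r -> injT T -> (forall i, load T i <= q) ->
  \sum_i (q - load T i) <= bound ->
  exists M : {set {set 'I_n * 'I_q}}, is_matching r sigma M /\ #|~: covered M| <= bound.
Proof.
move=> r0 HT Hq Hb; have [M [HM HC]] := realize Hpos r0 HT Hq.
by exists M; split => //; rewrite HC uncovered_card.
Qed.

Lemma finish_perf (T : seq ffT) : 0 < r -> injT T -> (forall i, load T i = q) ->
  exists M : {set {set 'I_n * 'I_q}}, is_matching r sigma M /\ covered M = setT.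
Proof.
move=> r0 HT Hq; have [M [HM HC]] := @realize sigma n q Hpos T r0 HT (fun i => eq_leq (Hq i)).
exists M; split => //; rewrite HC; apply/setP => v; rewrite !inE Hq; exact: ltn_ord.
Qed.

Lemma perf_n0 : 0 < r -> n = 0 ->
  exists M : {set {set 'I_n * 'I_q}}, is_matching r sigma M /\ covered M = setT.
Proof.
move=> r0 n0; apply: (@finish_perf [::]) => // i.
by case: i; rewrite n0.
Qed.

Lemma perf_T1 : 0 < r -> r %| q -> s <= n ->
  exists M : {set {set 'I_n * 'I_q}}, is_matching r sigma M /\ covered M = setT.
Proof.
move=> r0 rq sn; case: (posnP n) => n0; first exact: perf_n0.
pose i0 : 'I_n := Ordinal n0.
have uE := enum_uniq (mem 'I_n).
have sE : s <= size (enum 'I_n) by rewrite size_enum_ord.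
apply: (@finish_perf (rep (q %/ r) (T1 sigma i0 (enum 'I_n)))) => //.
  by apply: inj_rep; apply: T1_inj.
move=> i; rewrite load_rep T1_load // mem_enum /= mul1n divnK //.
Qed.

Lemma s_pos : 0 < r -> 0 < s.
Proof. by case: sigma. Qed.

Lemma part2gen (A : {set 'I_s}) al be : 0 < part_sum A -> 0 < part_sum (~: A) -> s <= n ->
  q = al * (part_sum A * part_sum (~: A)) + be * r ->
  exists M : {set {set 'I_n * 'I_q}}, is_matching r sigma M /\
    #|~: covered M| <= (n %% r) * (al * (part_sum A * part_sum (~: A))).
Proof.
set a := part_sum A; set b := part_sum (~: A); set L := a * b.
move=> a0 b0 sn Eq.
have Hr : a + b = r by apply: part_sumC.
have r0 : 0 < r by lia.
have n0 : 0 < n by apply: leq_trans sn; apply: s_pos.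
pose i0 : 'I_n := Ordinal n0.
have uE := enum_uniq (mem 'I_n).
have sE : s <= size (enum 'I_n) by rewrite size_enum_ord.
have T1l : forall i, load (T1 sigma i0 (enum 'I_n)) i = r.
  by move=> i; rewrite T1_load // mem_enum mul1n.
have Hn := divn_eq n r.
case: (posnP (n %/ r)) => p0.
  apply: (@finish (rep be (T1 sigma i0 (enum 'I_n)))) => //.
  - by apply: inj_rep; apply: T1_inj.
  - by move=> i; rewrite load_rep T1l Eq leq_addl.
  rewrite (eq_bigr (fun _ => al * L)); last by move=> i _; rewrite load_rep T1l Eq addnK.
  rewrite sum_nat_const card_ord; rewrite p0 mul0n add0n in Hn; by rewrite -Hn.
set p := n %/ r in Hn p0.
set N := p * r.
have N0 : 0 < N by rewrite muln_gt0 p0.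
have Nn : N <= n by rewrite Hn leq_addr.
have rN : r <= N by rewrite /N leq_pmull.
have Ld : forall i : 'I_n, load (rep be (T1 sigma i0 (enum 'I_n)) ++ grps i0 A N (p * al)) i =
    be * r + L * (if i < N then al else 0).
  move=> i; rewrite load_cat load_rep T1l grps_load //.
  have -> : r * (p * al) = N * al + 0 by rewrite /N addn0 mulnCA mulnA.
  rewrite count_res' //; case: ifP => _ //; by rewrite addn0.
apply: (@finish (rep be (T1 sigma i0 (enum 'I_n)) ++ grps i0 A N (p * al))) => //.
- apply: inj_cat; first by apply: inj_rep; apply: T1_inj.
  exact: grps_inj.
- by move=> i; rewrite Ld Eq; case: ifP => _; rewrite /L; lia.
apply: (@leq_trans (\sum_(i < n) (N <= i) * (al * L))).
  apply: leq_sum => i _; rewrite Ld Eq; case: ifP => H.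
    have -> : (N <= i) = false by rewrite leqNgt H.
    by rewrite /L; lia.
  have -> : (N <= i) = true by rewrite leqNgt H.
  by rewrite /L; lia.
rewrite -big_distrl /= sum_ge; apply: leq_mul => //; lia.
Qed.

Lemma part3gen (A : {set 'I_s}) al be : 0 < part_sum A -> 0 < part_sum (~: A) -> s + r <= n ->
  q = al * (part_sum A * part_sum (~: A)) + be * r -> al < r ->
  (part_sum A * part_sum (~: A)) * (al + 1) <= q ->
  exists M : {set {set 'I_n * 'I_q}}, is_matching r sigma M /\ #|~: covered M| <= (r - 1) ^ 2.
Proof.
set a := part_sum A; set b := part_sum (~: A); set L := a * b.
move=> a0 b0 sn Eq alr Hq.
have Hr : a + b = r by apply: part_sumC.
have r0 : 0 < r by lia.
have n0 : 0 < n by lia.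
pose i0 : 'I_n := Ordinal n0.
have uE := enum_uniq (mem 'I_n).
have sE : s <= size (enum 'I_n) by rewrite size_enum_ord; lia.
have T1l : forall i, load (T1 sigma i0 (enum 'I_n)) i = r.
  by move=> i; rewrite T1_load // mem_enum mul1n.
have Hna := divn_eq (n * al) r; have Hm := ltn_pmod (n * al) r0.
set m := (n * al) %% r in Hna Hm; set x := (n * al) %/ r in Hna.
pose e := if m == 0 then 0 else r - m.
pose G := x + (m != 0).
have HG : r * G = n * al + e.
  rewrite /G /e Hna; case: eqP => Hm0 /=; rewrite ?addn0 ?muln1 ?muln0; lia.
have er : e < r by rewrite /e; case: eqP => H; lia.
have en : e <= n by lia.
pose bq := (q - L * (al + 1)) %/ r.
have Hq2 := divn_eq (q - L * (al + 1)) r; have Hd := ltn_pmod (q - L * (al + 1)) r0.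
rewrite -/bq in Hq2.
have E1 : L * (al + 1) = L * al + L by rewrite mulnDr muln1.
have E2 : al * L = L * al by rewrite mulnC.
rewrite E2 in Eq.
have Hbq : bq <= be.
  rewrite -(leq_pmul2r r0); lia.
have Hbq' : bq * r <= be * r by rewrite leq_pmul2r.
set Xe := [seq i : 'I_n <- enum 'I_n | e <= i].
have uX : uniq Xe by apply: filter_uniq.
have memX : forall i, (i \in Xe) = (e <= i) by move=> i; rewrite mem_filter mem_enum andbT.
have sX : size Xe = n - e.
  rewrite size_filter count_enumP -sum1_card big_mkcond /= -(sum_ge n e).
  by apply: eq_bigr => i _; rewrite unfold_in; case: (e <= i).
have Ld : forall i : 'I_n,
    load (grps i0 A n G ++ rep bq (T1 sigma i0 (enum 'I_n)) ++ rep (be - bq) (T1 sigma i0 Xe)) i =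
    L * (al + (i < e)) + bq * r + (be - bq) * ((e <= i) * r).
  move=> i; rewrite !load_cat !load_rep T1l T1_load ?sX ?memX //; last by lia.
  rewrite grps_load //; last by lia.
  have -> : r * G = n * al + e by [].
  by rewrite count_res' // ltn_ord addnA.
apply: (@finish (grps i0 A n G ++ rep bq (T1 sigma i0 (enum 'I_n)) ++ rep (be - bq) (T1 sigma i0 Xe))) => //.
- apply: inj_cat; first by apply: grps_inj => //; lia.
  apply: inj_cat; apply: inj_rep; apply: T1_inj => //; rewrite sX; lia.
- move=> i; rewrite Ld mulnBl; case: (ltnP i e) => H /=.
    rewrite !mul0n !muln0 subnn addn0; lia.
  rewrite !mul1n addn0; lia.
apply: (@leq_trans (\sum_(i < n) (i < e) * (r - 1))).
  apply: leq_sum => i _; rewrite Ld mulnBl; case: (ltnP i e) => H /=.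
    rewrite !mul0n !muln0 subnn addn0 mul1n; lia.
  rewrite !mul1n addn0 mul0n; lia.
rewrite -big_distrl /= sum_lt expnS expn1; apply: leq_mul => //; lia.
Qed.
End Main.


Lemma cover_all n q (M : {set {set 'I_n * 'I_q}}) : #|~: covered M| <= 0 -> covered M = setT.
Proof.
rewrite leqn0 cards_eq0 => /eqP H; apply/setP => v.
have : v \notin ~: covered M by rewrite H inE.
by rewrite !inE negbK.
Qed.

Theorem theorem3p10 (r n q : nat) (sigma : seq nat)
    (A : {set 'I_(size sigma)}) :
  all (fun x => 0 < x) sigma -> sumn sigma = r ->
  r_good r sigma ->
  gcdn (part_sum A) (part_sum (~: A)) = 1 ->
  gcdn (part_sum A) r = 1 ->
  gcdn (part_sum (~: A)) r = 1 ->
  let s := size sigma in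
  let L := lcmn (part_sum A) (part_sum (~: A)) in
  [/\ ((r %| q) /\ s <= n \/ (r %| n) /\ (L - 1) * (r - 1) <= q) ->
        exists M : {set {set 'I_n * 'I_q}},
          is_matching r sigma M /\ covered M = setT,
      L * (r - 1) <= q -> s <= n ->
        exists M : {set {set 'I_n * 'I_q}},
          is_matching r sigma M /\ #|~: covered M| <= L * (r - 1) ^ 2
    & L * (r ^ 2 - 1) <= q -> 3 <= s -> s + r <= n ->
        exists M : {set {set 'I_n * 'I_q}},
          is_matching r sigma M /\ #|~: covered M| <= (r - 1) ^ 2].
Proof.
move=> Hpos Hsum _ g1 g2 g3 s L.
have Hab := part_sumC A; rewrite Hsum in Hab.
have sr : s <= r by rewrite -Hsum; apply: s_le_r.
subst r.
set r := sumn sigma in Hab sr g2 g3 *.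
set a := part_sum A in Hab g1 g2 L *; set b := part_sum (~: A) in Hab g1 g3 L *.
have r0 : 0 < r.
  case: (posnP r) => // r0; rewrite r0 gcdn0 in g2; lia.
case: (eqVneq r 1) => r1.
  have perf : exists M : {set {set 'I_n * 'I_q}}, is_matching r sigma M /\ covered M = setT.
    case: (posnP n) => n0; first exact: (perf_n0 q Hpos r0 n0).
    apply: perf_T1 => //; first by move: r1; rewrite /r => ->; rewrite dvd1n.
    lia.
  have perf' : forall c, exists M : {set {set 'I_n * 'I_q}}, is_matching r sigma M /\ #|~: covered M| <= c.
    move=> c; case: perf => M [HM HC]; exists M; split => //; by rewrite HC setCT cards0.
  by split => *.
have r2 : 2 <= r by lia.
have a0 : 0 < a by case: (posnP a) => // a0; rewrite a0 gcd0n in g2; lia.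
have b0 : 0 < b by case: (posnP b) => // b0; rewrite b0 gcd0n in g3; lia.
have EL : L = a * b by rewrite -(muln_lcm_gcd a b) g1 muln1.
have cL : coprime L r by rewrite EL coprimeMl /coprime g2 g3.
split.
- case => [[rq sn] | [rn Hq]]; first exact: (perf_T1 Hpos r0 rq sn).
  case: (posnP n) => n0; first exact: (perf_n0 q Hpos r0 n0).
  have rn' : r <= n by apply: dvdn_leq.
  have [al [be [alr Eq]]] := decomp r0 cL Hq.
  rewrite EL in Eq.
  have [M [HM HC]] := part2gen Hpos a0 b0 (leq_trans sr rn') Eq.
  exists M; split => //; apply: cover_all; move: HC; by rewrite (eqP rn) mul0n.
- move=> Hq sn.
  have Hq' : (L - 1) * (r - 1) <= q by apply: leq_trans Hq; rewrite leq_mul2r leq_subr orbT.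
  have [al [be [alr Eq]]] := decomp r0 cL Hq'.
  rewrite EL in Eq.
  have [M [HM HC]] := part2gen Hpos a0 b0 sn Eq.
  exists M; split => //; apply: (leq_trans HC).
  have h1 : n %% r <= r - 1 by have := ltn_pmod n r0; lia.
  have h2 : al <= r - 1 by lia.
  apply: (leq_trans (leq_mul h1 (leq_mul h2 (leqnn (a * b))))).
  by rewrite EL mulnA (mulnC (a * b)) expnS expn1.
- move=> Hq s3 sn.
  have Hr2 : r <= r ^ 2 - 1 by rewrite expnS expn1; nia.
  have Hq' : (L - 1) * (r - 1) <= q.
    apply: leq_trans Hq; apply: leq_mul; first exact: leq_subr.
    by apply: leq_trans Hr2; exact: leq_subr.
  have [al [be [alr Eq]]] := decomp r0 cL Hq'.
  rewrite EL in Eq.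
  apply: (part3gen Hpos a0 b0 sn Eq alr).
  rewrite -EL; apply: leq_trans Hq; apply: leq_mul => //; rewrite addn1; exact: leq_trans Hr2.
Qed.
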